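(* Let $n\ge 2$ and let $\mathcal{F}$ be a maximal coclique of $\Gamma_{2n}$. Let $A$ be an $(n-1)$-space of $\mathrm{PG}(2n,q)$ that occurs in a flag of $\mathcal{F}$. Then there exists $k\in\{1,\ldots,n+1\}$ such that the number of flags in $\mathcal{F}$ that contain $A$ is $\begin{bmatrix}k\\ 1\end{bmatrix}_q$. Furthermore, this number is $\begin{bmatrix}n+1\\ 1\end{bmatrix}_q$ if and only if every flag $(A',B')\in \mathcal{F}$ satisfies $B'\cap A\neq \emptyset$.
   Context: $\mathrm{PG}(2n,q)$ is the projective space of projective dimension $2n$ over the field of order $q$; an $i$-space is a subspace of projective dimension $i$. An $(n-1,n)$-flag is a pair $(A,B)$ with $A$ an $(n-1)$-space, $B$ an $n$-space and $A\subseteq B$; it ''contains'' $A$ if its $(n-1)$-space is $A$. Two such flags $(A_1,B_1),(A_2,B_2)$ are opposite if $A_1\cap B_2=A_2\cap B_1=\emptyset$. $\Gamma_{2n}$ is the graph whose vertices are the $(n-1,n)$-flags, adjacent when opposite; a maximal coclique is an inclusion-maximal set of pairwise non-opposite flags. $\begin{bmatrix}k\\ 1\end{bmatrix}_q=\frac{q^k-1}{q-1}$. *)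

(* Defs.v *)
From mathcomp Require Import all_boot all_order all_algebra all_fingroup all_field.
Set Implicit Arguments. Unset Strict Implicit. Unset Printing Implicit Defensive.
Import GRing.Theory.

(* Subspaces of F^m (i.e. of the projective space PG(m-1,F)), represented
   canonically by their row-space normal form <<A>>%MS.  A projective
   i-space is a vector subspace of rank i+1. *)
Definition subsp (F : fieldType) (m : nat) := {A : 'M[F]_m | (<<A>>%MS == A)}.

(* An (n-1,n)-flag of PG(2n,q): vector subspaces of F^(2n+1) of ranks n, n+1. *)
Definition is_flag (F : fieldType) (n : nat)
  (fl : subsp F (2 * n).+1 * subsp F (2 * n).+1) : bool :=
  [&& \rank (val fl.1) == n, \rank (val fl.2) == n.+1 & (val fl.1 <= val fl.2)%MS].

Definition flag (F : finFieldType) (n : nat) :=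
  {fl : subsp F (2 * n).+1 * subsp F (2 * n).+1 | is_flag fl}.

Definition flagA F n (f : flag F n) : subsp F (2 * n).+1 := (val f).1.
Definition flagB F n (f : flag F n) : subsp F (2 * n).+1 := (val f).2.

(* projectively empty intersection = trivial vector intersection *)
Definition disjoint_sp F m (U V : subsp F m) : bool :=
  \rank (val U :&: val V)%MS == 0%N.

Definition opposite F n (f g : flag F n) : bool :=
  disjoint_sp (flagA f) (flagB g) && disjoint_sp (flagA g) (flagB f).

Definition coclique F n (C : {set flag F n}) : Prop :=
  forall f g, f \in C -> g \in C -> ~~ opposite f g.

Definition maximal_coclique F n (C : {set flag F n}) : Prop :=
  coclique C /\ forall D : {set flag F n}, coclique D -> C \subset D -> D = C.

Definition qbin1 (q k : nat) : nat := (q ^ k - 1) %/ (q - 1).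

(* Main.v *)
Require Import Defs.
From mathcomp Require Import all_boot all_order all_algebra all_fingroup all_field.
From mathcomp Require Import zify.
Set Implicit Arguments. Unset Strict Implicit. Unset Printing Implicit Defensive.
Import GRing.Theory.

Lemma card_subsp (F : finFieldType) m k (X : 'M[F]_(k, m)) :
  #|[set v : 'rV[F]_m | (v <= X)%MS]| = (#|F| ^ \rank X)%N.
Proof.
have -> : [set v : 'rV[F]_m | (v <= X)%MS] =
          [set (u *m row_base X)%R | u : 'rV[F]_(\rank X)].
  apply/setP => v; rewrite inE; apply/idP/imsetP.
    rewrite -(eq_row_base X) => /submxP [u ->]; by exists u.
  by case=> u _ ->; rewrite -(eq_row_base X) submxMl.
rewrite card_imset; last exact: row_free_inj (row_base_free X).
by rewrite card_mx mul1n.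
Qed.

Lemma card_diff (F : finFieldType) m (X Y : 'M[F]_m) : (X <= Y)%MS ->
  #|[set v : 'rV[F]_m | (v <= Y)%MS && ~~ (v <= X)%MS]| =
  (#|F| ^ \rank Y - #|F| ^ \rank X)%N.
Proof.
move=> sXY.
have E : [set v : 'rV[F]_m | (v <= Y)%MS && ~~ (v <= X)%MS] =
   [set v : 'rV[F]_m | (v <= Y)%MS] :\: [set v : 'rV[F]_m | (v <= X)%MS].
  by apply/setP => v; rewrite !inE andbC.
have E2 : [set v : 'rV[F]_m | (v <= Y)%MS] :&: [set v : 'rV[F]_m | (v <= X)%MS]
   = [set v : 'rV[F]_m | (v <= X)%MS].
  apply/setIidPr/subsetP => v; rewrite !inE => h; exact: submx_trans h sXY.
have := cardsID [set v : 'rV[F]_m | (v <= X)%MS] [set v : 'rV[F]_m | (v <= Y)%MS].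
rewrite E2 -E !card_subsp => <-. by rewrite addKn.
Qed.

Lemma qbin1_mul q j : 0 < q - 1 -> (qbin1 q j * (q - 1) = q ^ j - 1)%N.
Proof.
move=> hq; rewrite /qbin1.
have := subn_exp q 1 j; rewrite exp1n => ->.
by rewrite mulKn // mulnC.
Qed.
Lemma flagP (F : finFieldType) n (f : flag F n) :
  [/\ \rank (val (flagA f)) = n, \rank (val (flagB f)) = n.+1 &
      (val (flagA f) <= val (flagB f))%MS].
Proof. case: f => [[a b] h]; rewrite /flagA /flagB /=. by case/and3P: h => /eqP h1 /eqP h2 h3. Qed.

Lemma key (F : finFieldType) n (f g : flag F n) :
  disjoint_sp (flagA f) (flagB g) ->
  ~~ disjoint_sp (flagA g) (flagB f) =
  (val (flagB f) <= val (flagA f) + val (flagA g))%MS.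
Proof.
rewrite /disjoint_sp.
move: (flagP f) (flagP g).
move: (val (flagA f)) (val (flagB f)) (val (flagA g)) (val (flagB g)).
move=> A B A' B' [rA rB sAB] [rA' rB' sAB']. move=> /eqP dAB'.
have cAA' : \rank (A :&: A')%MS = 0%N.
  have : (A :&: A' <= A :&: B')%MS by apply: capmxS.
  by move/mxrankS; rewrite dAB' leqn0 => /eqP.
have r0 := mxrank_sum_cap A A'; rewrite cAA' rA rA' addn0 in r0.
have r1 := mxrank_sum_cap A' B; rewrite rA' rB in r1.
have s01 : (A + A' <= A' + B)%MS.
  by rewrite addsmx_sub addsmxSl andbT (submx_trans sAB) // addsmxSr.
have l01 := mxrankS s01.
apply/idP/idP.
  move=> hc.
  have e : \rank (A + A')%MS == \rank (A' + B)%MS.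
    rewrite eqn_leq l01 /=. lia.
  rewrite (mxrank_leqif_sup s01).2 in e.
  exact: submx_trans (addsmxSr A' B) e.
move=> sB.
have : (A' + B <= A + A')%MS by rewrite addsmx_sub sB addsmxSr.
move/mxrankS => h. lia.
Qed.

Lemma rank_addv (F : finFieldType) m (X : 'M[F]_m) (v : 'rV[F]_m) :
  ~~ (v <= X)%MS -> \rank (X + v)%MS = (\rank X).+1.
Proof.
move=> nv.
have h1 := (mxrank_adds_leqif X v).1.
have h0 := rank_leq_row v.
have : (X < X + v)%MS.
  by rewrite ltmxE addsmxSl /= addsmx_sub submx_refl.
rewrite ltmxErank => /andP [_ h2]. lia.
Qed.

Lemma count_flags (F : finFieldType) n (A : subsp F (2 * n).+1)
  (W : 'M[F]_((2 * n).+1)) :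
  \rank (val A) = n -> (val A <= W)%MS ->
  (#|[set f : flag F n | (flagA f == A) && (val (flagB f) <= W)%MS]|
     * (#|F| ^ n * (#|F| - 1)) = #|F| ^ \rank W - #|F| ^ n)%N.
Proof.
move=> rA sAW.
set m := (2 * n).+1.
set T := [set f : flag F n | _].
pose S := [set (val (flagB f) : 'M[F]_m) | f in T].
have memS : forall B : 'M[F]_m, B \in S = [&& (<<B>>%MS == B), \rank B == n.+1,
                                 (val A <= B)%MS & (B <= W)%MS].
  move=> B; apply/imsetP/idP.
    case=> f; rewrite inE => /andP [/eqP hA sBW] ->.
    case: (flagP f) => _ rB sAB; rewrite hA in sAB.
    by rewrite (valP (flagB f)) rB eqxx sAB sBW.
  case/and4P => hB rB sAB sBW.
  pose Bs : subsp F m := exist _ B hB.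
  have hf : is_flag (A, Bs) by rewrite /is_flag /= rA rB sAB eqxx.
  exists (exist _ (A, Bs) hf) => //.
  by rewrite inE /flagA /flagB /= eqxx sBW.
have cTS : #|T| = #|S|.
  rewrite card_in_imset //.
  move=> f1 f2; rewrite !inE => /andP [/eqP h1 _] /andP [/eqP h2 _] e.
  apply: val_inj; move: e h1 h2.
  case: f1 f2 => [[a1 b1] p1] [[a2 b2] p2]; rewrite /flagA /flagB /= => e -> ->.
  by congr pair; apply: val_inj.
pose V := [set v : 'rV[F]_m | (v <= W)%MS && ~~ (v <= val A)%MS].
pose phi (v : 'rV[F]_m) : 'M[F]_m := (<<(val A + v)%MS>>)%MS.
have cV : #|V| = (#|F| ^ \rank W - #|F| ^ n)%N by rewrite card_diff // rA.
have phiS : forall v, v \in V -> phi v \in S.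
  move=> v; rewrite memS inE => /andP [svW nv].
  rewrite /phi genmx_id eqxx /= !genmxE rank_addv // rA eqxx /=.
  by rewrite addsmxSl addsmx_sub sAW svW.
have fib : forall B, B \in S ->
    #|[set v in V | phi v == B]| = (#|F| ^ n.+1 - #|F| ^ n)%N.
  move=> B; rewrite memS => /and4P [/eqP hB /eqP rB sAB sBW].
  rewrite -rB -rA -card_diff //; apply: eq_card => v; rewrite !inE.
  apply/idP/idP.
    case/andP => /andP [svW nv] /eqP <-.
    by rewrite nv andbT /phi genmxE addsmxSr.
  case/andP => svB nv; rewrite nv (submx_trans svB sBW) /=.
  apply/eqP; rewrite /phi -hB; apply/genmxP.
  have s1 : (val A + v <= B)%MS by rewrite addsmx_sub sAB svB.
  rewrite -(mxrank_leqif_eq s1).2 rank_addv // rA rB.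
  done.
have : #|V| = (\sum_(B in S) #|[set v in V | phi v == B]|)%N.
  rewrite -sum1_card (partition_big phi (mem S)) //=.
  apply: eq_bigr => B _; rewrite -sum1_card; apply: eq_bigl => v; by rewrite inE.
rewrite (eq_bigr _ fib) sum_nat_const cV -cTS => ->.
congr (_ * _); by rewrite mulnBr muln1 expnS mulnC.
Qed.

Lemma dsym (F : finFieldType) m (U V : subsp F m) :
  disjoint_sp U V = disjoint_sp V U.
Proof. by rewrite /disjoint_sp capmxC. Qed.

Theorem mainTheorem4 (F : finFieldType) (n : nat) (Hn : (2 <= n)%N)
  (C : {set flag F n}) (HC : maximal_coclique C)
  (A : subsp F (2 * n).+1) (HA : exists2 f, f \in C & flagA f = A) :
  (exists2 k : nat, (1 <= k <= n.+1)%N &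
     #|[set f in C | flagA f == A]| = qbin1 #|F| k) /\
  (#|[set f in C | flagA f == A]| = qbin1 #|F| n.+1 <->
     (forall f, f \in C -> ~~ disjoint_sp (flagB f) A)).
Proof.
case: HC => cC maxC.
case: HA => f0 f0C hf0.
have [rA _ _] := flagP f0; rewrite hf0 in rA.
have q1 : (1 < #|F|)%N := card_finNzRing_gt1 F.
set q := #|F| in q1 *.
pose P := fun g : flag F n => (g \in C) && disjoint_sp A (flagB g).
pose W := (\bigcap_(g | P g) (val A + val (flagA g)))%MS.
have sAW : (val A <= W)%MS by apply/sub_bigcapmxP => g _; exact: addsmxSl.
have ET : [set f in C | flagA f == A] =
          [set f : flag F n | (flagA f == A) && (val (flagB f) <= W)%MS].
  apply/setP => f; rewrite !inE; case: eqP => [hfA|]; rewrite ?andbT ?andbF //=.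
  apply/idP/idP.
    move=> fC; apply/sub_bigcapmxP => g /andP [gC dg].
    rewrite -hfA in dg *; rewrite -key //.
    by have := cC f g fC gC; rewrite /opposite dg.
  move=> sBW.
  have nop : forall g, g \in C -> ~~ opposite f g.
    move=> g gC; rewrite /opposite.
    case dg: (disjoint_sp (flagA f) (flagB g)) => //=.
    rewrite key //.
    move/sub_bigcapmxP: sBW => hB.
    by have := hB g; rewrite /P gC -hfA dg /=; apply.
  have cD : coclique (f |: C).
    move=> x y; rewrite !inE => /orP [/eqP -> | xC] /orP [/eqP -> | yC].
    - rewrite /opposite /disjoint_sp; have [rfA _ sfAB] := flagP f.
      have : (val (flagA f) <= val (flagA f) :&: val (flagB f))%MS.
        by rewrite sub_capmx submx_refl sfAB.
      move/mxrankS; rewrite rfA => h.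
      apply/negP => /andP [/eqP h1 _]; lia.
    - exact: nop.
    - by rewrite /opposite andbC; apply: nop.
    - exact: cC.
  have e := maxC _ cD (subsetUr _ _).
  by rewrite -e; apply/setU1P; left.
have cnt := count_flags rA sAW; rewrite -ET in cnt.
set N := #|[set f in C | flagA f == A]| in cnt *.
set k := (\rank W - n)%N.
have rW : \rank W = (n + k)%N.
  have := mxrankS sAW; rewrite rA /k; lia.
rewrite rW expnD -/q in cnt.
have hN : (N * (q - 1) = q ^ k - 1)%N.
  have : (q ^ n * (N * (q - 1)) = q ^ n * (q ^ k - 1))%N.
    by rewrite [RHS]mulnBr muln1 -cnt mulnCA.
  move/eqP; rewrite eqn_pmul2l ?expn_gt0 ?(ltnW q1) //; exact/eqP.
have q1' : (0 < q - 1)%N by lia.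
have hNq : N = qbin1 q k by rewrite /qbin1 -hN mulnK.
have Npos : (0 < N)%N.
  by apply/card_gt0P; exists f0; rewrite inE f0C hf0 eqxx.
have kpos : (0 < k)%N.
  rewrite lt0n; apply/eqP => k0; move: hN; rewrite k0 expn0 subnn => /eqP.
  rewrite muln_eq0 => /orP [] /eqP; lia.
have kle : (k <= n.+1)%N by have := rank_leq_col W; lia.
split.
  by exists k => //; rewrite kpos kle.
rewrite hNq; split.
  move=> e g gC; apply/negP => dg; rewrite dsym in dg.
  have ekn : k = n.+1.
    apply/eqP; rewrite -(eqn_exp2l _ _ q1); apply/eqP.
    have h1 := qbin1_mul k q1'; have h2 := qbin1_mul n.+1 q1'.
    rewrite e h2 in h1.
    have := expn_gt0 q k; have := expn_gt0 q n.+1; rewrite (ltnW q1) /=.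
    lia.
  have sW : (W <= val A + val (flagA g))%MS.
    rewrite /W (bigD1 g) /=; last by rewrite /P gC dg.
    exact: capmxSl.
  have := mxrankS sW; have := (mxrank_adds_leqif (val A) (val (flagA g))).1.
  have [rAg _ _] := flagP g.
  rewrite rW rA rAg ekn; lia.
move=> H.
have W1 : W = (1%:M)%R.
  rewrite /W big_pred0 // => g; rewrite /P; case gC: (g \in C) => //=.
  by rewrite dsym; apply/negbTE; exact: H g gC.
have : k = n.+1 by move: rW; rewrite W1 mxrank1; lia.
by move=> ->.
Qed.
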